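(* Let $M\models\mathrm{AA}$ and let $I\subseteq M$ be a proper cut. Then (i) $I$ is not formula-definable; (ii) if $1\le y$ for every $y\in M\setminus I$, then $M\setminus I$ is not formula-definable.
   Context: Structures are complete metric spaces of diameter at most $1$ in the language $L=\{+,\cdot,\wedge,\vee,0,1\}$ (operations $1$-Lipschitz, $d$ the only relation symbol). Affine formulas are built from $1$ and atomic formulas $d(t_1,t_2)$ using $+$, scalar multiplication by reals, $\sup_x$, $\inf_x$. $\mathrm{AA}$ is the set of all closed affine conditions true in every model of first-order Peano arithmetic (formulated in $L$ with lattice operations min/max and discrete metric). $x\le y$ means $x\wedge y=x$. A cut in $M$ is a nonempty $I\subseteq M$ such that $x\le y\in I$ implies $x\in I$, and $x\in I$ implies $x+1\in I$; it is proper if $I\ne M$. A set $D\subseteq M$ is formula-definable if it is closed and there is an affine formula $\phi(x)$ with parameters from $M$ such that $d(x,D)=\inf_{y\in D}d(x,y)=\phi^M(x)$ for all $x$. *)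

(* Defs.v *)
From HB Require Import structures.
From mathcomp Require Import all_boot all_order all_algebra.
From mathcomp Require Import all_classical all_reals.
From mathcomp Require Import Rstruct.
Import Order.TTheory GRing.Theory Num.Theory.
Local Open Scope ring_scope.
Local Open Scope classical_set_scope.

Notation real := Rdefinitions.R.

Record Lpre := {
  car :> Type;
  dist : car -> car -> real;
  ladd : car -> car -> car;
  lmul : car -> car -> car;
  lmeet : car -> car -> car;
  ljoin : car -> car -> car;
  lzero : car;
  lone : car }.

Set Implicit Arguments. Unset Strict Implicit. Unset Printing Implicit Defensive.

Definition lip2 (M : Lpre) (f : M -> M -> M) : Prop :=
  forall x y x' y', dist M (f x y) (f x' y') <= Num.max (dist M x x') (dist M y y').

Definition cauchy (M : Lpre) (u : nat -> M) : Prop :=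
  forall e : real, 0 < e -> exists N, forall n m, (N <= n)%N -> (N <= m)%N ->
    dist M (u n) (u m) < e.

Definition converges_to (M : Lpre) (u : nat -> M) (x : M) : Prop :=
  forall e : real, 0 < e -> exists N, forall n, (N <= n)%N -> dist M (u n) x < e.

Record Lstruct_axioms (M : Lpre) : Prop := {
  ax_inhabited : inhabited M;
  ax_dist_ge0 : forall x y, 0 <= dist M x y;
  ax_dist_le1 : forall x y, dist M x y <= 1;
  ax_dist_eq0 : forall x y, dist M x y = 0 <-> x = y;
  ax_dist_sym : forall x y, dist M x y = dist M y x;
  ax_dist_tri : forall x y z, dist M x z <= dist M x y + dist M y z;
  ax_complete : forall u : nat -> M, cauchy u -> exists x : M, converges_to u x;
  ax_lip_add : lip2 (ladd M);
  ax_lip_mul : lip2 (lmul M);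
  ax_lip_meet : lip2 (lmeet M);
  ax_lip_join : lip2 (ljoin M) }.

Inductive term :=
  | tvar of nat | tzero | tone
  | tadd of term & term | tmul of term & term
  | tmeet of term & term | tjoin of term & term.

Fixpoint teval (M : Lpre) (a : nat -> M) (t : term) : M :=
  match t with
  | tvar n => a n
  | tzero => lzero M
  | tone => lone M
  | tadd t1 t2 => ladd M (teval a t1) (teval a t2)
  | tmul t1 t2 => lmul M (teval a t1) (teval a t2)
  | tmeet t1 t2 => lmeet M (teval a t1) (teval a t2)
  | tjoin t1 t2 => ljoin M (teval a t1) (teval a t2)
  end.

Fixpoint tfree (k : nat) (t : term) : bool :=
  match t with
  | tvar n => n == k
  | tzero | tone => false
  | tadd t1 t2 | tmul t1 t2 | tmeet t1 t2 | tjoin t1 t2 => tfree k t1 || tfree k t2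
  end.

Inductive aform :=
  | aone
  | adist of term & term
  | aplus of aform & aform
  | ascale of real & aform
  | asup of nat & aform
  | ainf of nat & aform.

Fixpoint afree (k : nat) (f : aform) : bool :=
  match f with
  | aone => false
  | adist t1 t2 => tfree k t1 || tfree k t2
  | aplus f1 f2 => afree k f1 || afree k f2
  | ascale _ f1 => afree k f1
  | asup n f1 | ainf n f1 => (n != k) && afree k f1
  end.

Definition closed_aform (f : aform) : Prop := forall k, ~~ afree k f.

Definition upd (T : Type) (a : nat -> T) (n : nat) (x : T) : nat -> T :=
  fun k => if k == n then x else a k.

Fixpoint aeval (M : Lpre) (a : nat -> M) (f : aform) : real :=
  match f with
  | aone => 1
  | adist t1 t2 => dist M (teval a t1) (teval a t2)
  | aplus f1 f2 => aeval a f1 + aeval a f2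
  | ascale r f1 => r * aeval a f1
  | asup n f1 => sup (range (fun x : M => aeval (upd a n x) f1))
  | ainf n f1 => inf (range (fun x : M => aeval (upd a n x) f1))
  end.

Unset Implicit Arguments.
Record PAstr := {
  pcar :> Type;
  padd : pcar -> pcar -> pcar;
  pmul : pcar -> pcar -> pcar;
  pzero : pcar;
  pone : pcar }.

Set Implicit Arguments.

Inductive pterm :=
  | pvar of nat | pz | po | pplus of pterm & pterm | ptimes of pterm & pterm.

Fixpoint pteval (N : PAstr) (a : nat -> N) (t : pterm) : N :=
  match t with
  | pvar n => a n
  | pz => pzero N
  | po => pone N
  | pplus t1 t2 => padd N (pteval a t1) (pteval a t2)
  | ptimes t1 t2 => pmul N (pteval a t1) (pteval a t2)
  end.

Inductive foform :=
  | feq of pterm & pterm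
  | fnot of foform
  | fand of foform & foform
  | fex of nat & foform.

Fixpoint fosat (N : PAstr) (a : nat -> N) (f : foform) : Prop :=
  match f with
  | feq t1 t2 => pteval a t1 = pteval a t2
  | fnot f1 => ~ fosat a f1
  | fand f1 f2 => fosat a f1 /\ fosat a f2
  | fex n f1 => exists x : N, fosat (upd a n x) f1
  end.

Record is_PA (N : PAstr) : Prop := {
  pa_succ_ne0 : forall x, padd N x (pone N) <> pzero N;
  pa_succ_inj : forall x y, padd N x (pone N) = padd N y (pone N) -> x = y;
  pa_add0 : forall x, padd N x (pzero N) = x;
  pa_addS : forall x y, padd N x (padd N y (pone N)) = padd N (padd N x y) (pone N);
  pa_mul0 : forall x, pmul N x (pzero N) = pzero N;
  pa_mulS : forall x y, pmul N x (padd N y (pone N)) = padd N (pmul N x y) x;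
  pa_ind : forall (f : foform) (n : nat) (a : nat -> N),
      fosat (upd a n (pzero N)) f ->
      (forall x, fosat (upd a n x) f -> fosat (upd a n (padd N x (pone N))) f) ->
      forall x, fosat (upd a n x) f }.

Definition pa_le (N : PAstr) (x y : N) : Prop := exists z, padd N x z = y.

(* a model of PA viewed as an L-structure: min/max lattice ops, discrete metric *)
Definition PA_to_L (N : PAstr) : Lpre := {|
  car := N;
  dist := fun x y => if pselect (x = y) then 0 else 1;
  ladd := padd N;
  lmul := pmul N;
  lmeet := fun x y => if pselect (pa_le x y) then x else y;
  ljoin := fun x y => if pselect (pa_le x y) then y else x;
  lzero := pzero N;
  lone := pone N |}.

Definition AA (f : aform) : Prop :=
  closed_aform f /\
  forall N : PAstr, is_PA N -> forall a : nat -> PA_to_L N, 0 <= aeval a f.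

Definition models_AA (M : Lpre) : Prop :=
  forall f, AA f -> forall a : nat -> M, 0 <= aeval a f.

Definition Lle (M : Lpre) (x y : M) : Prop := lmeet M x y = x.

Definition is_cut (M : Lpre) (I : set M) : Prop :=
  I !=set0 /\
  (forall x y, Lle x y -> I y -> I x) /\
  (forall x, I x -> I (ladd M x (lone M))).

Definition proper_cut (M : Lpre) (I : set M) : Prop := is_cut I /\ I != setT.

Definition dist_to_set (M : Lpre) (x : M) (D : set M) : real :=
  inf [set dist M x y | y in D].

Definition metric_closed (M : Lpre) (D : set M) : Prop :=
  forall x, (forall e : real, 0 < e -> exists2 y, D y & dist M x y < e) -> D x.

(* D is formula-definable: closed, and d(x,D) = phi(x) for an affine formula
   phi whose variable 0 is x and whose other free variables are parameters a. *)
Definition formula_definable (M : Lpre) (D : set M) : Prop :=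
  metric_closed D /\
  exists (f : aform) (a : nat -> M), forall x : M, dist_to_set x D = aeval (upd a 0 x) f.

(* Main.v *)
Require Import Defs.
From HB Require Import structures.
From mathcomp Require Import all_boot all_order all_algebra.
From mathcomp Require Import all_classical all_reals.
From mathcomp Require Import Rstruct.
From mathcomp Require Import lra zify.
From Stdlib Require Import Classical.
Import Order.TTheory GRing.Theory Num.Theory.
Local Open Scope ring_scope.
Local Open Scope classical_set_scope.
Set Implicit Arguments. Unset Strict Implicit. Unset Printing Implicit Defensive.


Fixpoint tbnd (t : term) : nat :=
  match t with
  | tvar n => n.+1
  | tzero | tone => 0%N
  | tadd t1 t2 | tmul t1 t2 | tmeet t1 t2 | tjoin t1 t2 => maxn (tbnd t1) (tbnd t2)
  end.

Fixpoint abnd (f : aform) : nat :=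
  match f with
  | aone => 0%N
  | adist t1 t2 => maxn (tbnd t1) (tbnd t2)
  | aplus f1 f2 => maxn (abnd f1) (abnd f2)
  | ascale _ f1 => abnd f1
  | asup n f1 | ainf n f1 => maxn n.+1 (abnd f1)
  end.

Lemma upd_eq (T : Type) (a : nat -> T) n x : upd a n x n = x.
Proof. by rewrite /upd eqxx. Qed.

Lemma upd_neq (T : Type) (a : nat -> T) n x k : k != n -> upd a n x k = a k.
Proof. by rewrite /upd => /negbTE ->. Qed.

Lemma upd_comm (T : Type) (a : nat -> T) n x m y : n != m ->
  upd (upd a n x) m y = upd (upd a m y) n x.
Proof.
move=> nm; apply: funext => k; rewrite /upd.
case: (eqVneq k m) => [->|km]; last by [].
by rewrite eq_sym (negbTE nm).
Qed.

Lemma upd_same (T : Type) (a : nat -> T) n : upd a n (a n) = a.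
Proof. by apply: funext => k; rewrite /upd; case: eqP => // ->. Qed.

Lemma teval_irr (M : Lpre) (a : nat -> M) X x t : (tbnd t <= X)%N ->
  teval (upd a X x) t = teval a t.
Proof.
elim: t => [n|||t1 IH1 t2 IH2|t1 IH1 t2 IH2|t1 IH1 t2 IH2|t1 IH1 t2 IH2] //=;
  try (by rewrite geq_max => /andP[h1 h2]; rewrite IH1 ?IH2).
move=> h; rewrite upd_neq //; apply/negP => /eqP E; by move: h; rewrite E ltnn.
Qed.

Lemma aeval_irr (M : Lpre) X x f : (abnd f <= X)%N ->
  forall (a : nat -> M), aeval (upd a X x) f = aeval a f.
Proof.
elim: f => [|t1 t2|f1 IH1 f2 IH2|r f1 IH1|n f1 IH1|n f1 IH1] /= h a.
- by [].
- by move: h; rewrite geq_max => /andP[h1 h2]; rewrite !teval_irr.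
- by move: h; rewrite geq_max => /andP[h1 h2]; rewrite IH1 ?IH2.
- by rewrite IH1.
- move: h; rewrite geq_max => /andP[h1 h2].
  have nX : X != n by apply/negP => /eqP E; move: h1; rewrite E ltnn.
  have -> : (fun y => aeval (upd (upd a X x) n y) f1) = (fun y => aeval (upd a n y) f1).
    by apply: funext => y; rewrite upd_comm // IH1.
  by [].
- move: h; rewrite geq_max => /andP[h1 h2].
  have nX : X != n by apply/negP => /eqP E; move: h1; rewrite E ltnn.
  have -> : (fun y => aeval (upd (upd a X x) n y) f1) = (fun y => aeval (upd a n y) f1).
    by apply: funext => y; rewrite upd_comm // IH1.
  by [].
Qed.

Lemma tfree_bnd t k : (tbnd t <= k)%N -> ~~ tfree k t.
Proof.
elim: t => [n|||t1 IH1 t2 IH2|t1 IH1 t2 IH2|t1 IH1 t2 IH2|t1 IH1 t2 IH2] //=;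
  try (by rewrite geq_max => /andP[h1 h2]; rewrite negb_or IH1 ?IH2).
move=> h; apply/negP => /eqP E; by move: h; rewrite E ltnn.
Qed.

Lemma afree_bnd f k : (abnd f <= k)%N -> ~~ afree k f.
Proof.
elim: f => [|t1 t2|f1 IH1 f2 IH2|r f1 IH1|n f1 IH1|n f1 IH1] //= h.
- by move: h; rewrite geq_max => /andP[h1 h2]; rewrite negb_or !tfree_bnd.
- by move: h; rewrite geq_max => /andP[h1 h2]; rewrite negb_or IH1 ?IH2.
- by move: h; rewrite geq_max => /andP[h1 h2]; rewrite negb_and IH1 ?orbT.
- by move: h; rewrite geq_max => /andP[h1 h2]; rewrite negb_and IH1 ?orbT.
Qed.

Fixpoint closeall (n : nat) (f : aform) : aform :=
  match n with 0%N => f | k.+1 => ainf k (closeall k f) end.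

Lemma afree_closeall n f k : afree k (closeall n f) -> (n <= k)%N && afree k f.
Proof.
elim: n => [|n IH] //=; move=> /andP[nk /IH /andP[h1 h2]].
by rewrite h2 andbT ltn_neqAle nk h1.
Qed.

Lemma closed_closeall n f : (abnd f <= n)%N -> closed_aform (closeall n f).
Proof.
move=> h k; apply/negP => /afree_closeall /andP[nk fk].
by move: fk; apply/negP/afree_bnd/(leq_trans h).
Qed.

Section RealSets.
Implicit Types (T : Type).

Lemma range_le_sup T (g : T -> real) b y : (forall z, g z <= b) -> g y <= sup (range g).
Proof.
move=> hb; apply: ub_le_sup; last by exists y.
by exists b => _ [z _ <-].
Qed.

Lemma range_sup_le T (g : T -> real) b : inhabited T -> (forall z, g z <= b) -> sup (range g) <= b.
Proof.
move=> [y] hb; apply: ge_sup; first by exists (g y), y.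
by move=> _ [z _ <-].
Qed.

Lemma range_inf_le T (g : T -> real) b y : (forall z, b <= g z) -> inf (range g) <= g y.
Proof.
move=> hb; apply: ge_inf; last by exists y.
by exists b => _ [z _ <-].
Qed.

Lemma range_le_inf T (g : T -> real) b : inhabited T -> (forall z, b <= g z) -> b <= inf (range g).
Proof.
move=> [y] hb; apply: lb_le_inf; first by exists (g y), y.
by move=> _ [z _ <-].
Qed.

End RealSets.

Definition good (M : Lpre) := inhabited M /\ forall x y : M, 0 <= dist M x y <= 1.

Fixpoint abound (f : aform) : real :=
  match f with
  | aone => 1 | adist _ _ => 1
  | aplus f1 f2 => abound f1 + abound f2
  | ascale r f1 => `|r| * abound f1
  | asup _ f1 | ainf _ f1 => abound f1
  end.

Lemma aeval_bound (M : Lpre) (HM : good M) f : forall (a : nat -> M), `|aeval a f| <= abound f.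
Proof.
case: HM => inh hd.
elim: f => [|t1 t2|f1 IH1 f2 IH2|r f1 IH1|n f1 IH1|n f1 IH1] a /=.
- by rewrite normr1.
- by have /andP[h0 h1] := hd (teval a t1) (teval a t2); rewrite ger0_norm.
- by apply: le_trans (ler_normD _ _) _; apply: lerD.
- by rewrite normrM; apply: ler_wpM2l.
- have hb z : `|aeval (upd a n z) f1| <= abound f1 by [].
  case: (inh) => y.
  rewrite ler_norml; apply/andP; split.
  + apply: le_trans (@range_le_sup _ _ (abound f1) y _); last first.
      by move=> z; have := hb z; rewrite ler_norml => /andP[].
    by have := hb y; rewrite ler_norml => /andP[].
  + apply: range_sup_le => // z; by have := hb z; rewrite ler_norml => /andP[].
- have hb z : `|aeval (upd a n z) f1| <= abound f1 by [].
  case: (inh) => y.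
  rewrite ler_norml; apply/andP; split.
  + apply: range_le_inf => // z; by have := hb z; rewrite ler_norml => /andP[].
  + apply: le_trans (@range_inf_le _ _ (- abound f1) y _) _; last first.
      by have := hb y; rewrite ler_norml => /andP[].
    by move=> z; have := hb z; rewrite ler_norml => /andP[].
Qed.

Section Good.
Variables (M : Lpre) (HM : good M).

Lemma ainf_le (e : nat -> M) n g y : aeval e (ainf n g) <= aeval (upd e n y) g.
Proof.
apply: (@range_inf_le _ (fun z => aeval (upd e n z) g) (- abound g) y) => z.
by have := aeval_bound HM g (upd e n z); rewrite ler_norml => /andP[].
Qed.

Lemma asup_ge (e : nat -> M) n g y : aeval (upd e n y) g <= aeval e (asup n g).
Proof.
apply: (@range_le_sup _ (fun z => aeval (upd e n z) g) (abound g) y) => z.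
by have := aeval_bound HM g (upd e n z); rewrite ler_norml => /andP[].
Qed.

Lemma ainf_ge (e : nat -> M) n g b : (forall y, b <= aeval (upd e n y) g) -> b <= aeval e (ainf n g).
Proof. by move=> h; apply: range_le_inf => //; case: HM. Qed.

Lemma asup_le (e : nat -> M) n g b : (forall y, aeval (upd e n y) g <= b) -> aeval e (asup n g) <= b.
Proof. by move=> h; apply: range_sup_le => //; case: HM. Qed.

Lemma closeall_pos n f : (forall e : nat -> M, 0 <= aeval e (closeall n f)) ->
  forall e : nat -> M, 0 <= aeval e f.
Proof.
elim: n => [|n IH] //= h; apply: IH => e.
apply: le_trans (h e) _.
by have := ainf_le e n (closeall n f) (e n); rewrite upd_same.
Qed.

Lemma closeall_pos' n f : (forall e : nat -> M, 0 <= aeval e f) ->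
  forall e : nat -> M, 0 <= aeval e (closeall n f).
Proof.
elim: n => [|n IH] //= h e.
by apply: ainf_ge => y; apply: IH.
Qed.

End Good.

Lemma Lstruct_good (M : Lpre) : Lstruct_axioms M -> good M.
Proof.
case=> inh h0 h1 *; split => // x y; by rewrite h0 h1.
Qed.


Definition Xv (phi : aform) := (abnd phi).+1.
Definition shInf (C : real) phi t := ainf 0 (aplus phi (ascale C (adist (tvar 0) t))).
Definition shSup (C : real) phi t := asup 0 (aplus phi (ascale (- C) (adist (tvar 0) t))).
Definition Dform C phi := asup (Xv phi)
  (aplus (shInf C phi (tadd (tvar (Xv phi)) tone)) (ascale (-1) (shSup C phi (tvar (Xv phi))))).
Definition Psi C K phi := aplus (ascale K (Dform C phi))
  (aplus (shInf C phi tzero) (ascale (-1) (asup 0 phi))).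
Definition IndAx C K phi := closeall (Xv phi).+1 (Psi C K phi).

Lemma IndAx_closed C K phi : closed_aform (IndAx C K phi).
Proof. apply: closed_closeall; rewrite /Psi /Dform /shInf /shSup /Xv /=; lia. Qed.

Lemma aeval_Psi (M : Lpre) (e : nat -> M) C K phi : aeval e (Psi C K phi) =
  K * aeval e (Dform C phi) + (aeval e (shInf C phi tzero) + -1 * aeval e (asup 0 phi)).
Proof. by []. Qed.

Lemma eval_inner (M : Lpre) (e : nat -> M) phi x y :
  aeval (upd (upd e (Xv phi) x) 0 y) phi = aeval (upd e 0 y) phi.
Proof. by rewrite upd_comm // aeval_irr // /Xv. Qed.

Lemma updX0 (T : Type) (e : nat -> T) phi x y :
  upd (upd e (Xv phi) x) 0 y (Xv phi) = x.
Proof. by rewrite upd_neq // upd_eq. Qed.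

Lemma upd0 (T : Type) (e : nat -> T) y : upd e 0 y 0 = y.
Proof. exact: upd_eq. Qed.

Lemma M_ind (M : Lpre) (HM : good M) (d0 : forall x, dist M x x = 0) C K phi (hK : 0 <= K)
  (e : nat -> M) (hpos : 0 <= aeval e (Psi C K phi))
  (hdec : forall x, aeval (upd e 0 (ladd M x (lone M))) phi <= aeval (upd e 0 x) phi) :
  forall x, aeval (upd e 0 x) phi <= aeval (upd e 0 (lzero M)) phi.
Proof.
move=> x.
have hD : aeval e (Dform C phi) <= 0.
  apply: asup_le => // z.
  have h1 := ainf_le HM (upd e (Xv phi) z) 0
    (aplus phi (ascale C (adist (tvar 0) (tadd (tvar (Xv phi)) tone)))) (ladd M z (lone M)).
  have h2 := asup_ge HM (upd e (Xv phi) z) 0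
    (aplus phi (ascale (- C) (adist (tvar 0) (tvar (Xv phi))))) z.
  rewrite /= !eval_inner !updX0 !upd0 !d0 in h1 h2.
  rewrite /=; have := hdec z; rewrite /shInf /shSup; lra.
have hP := ainf_le HM e 0 (aplus phi (ascale C (adist (tvar 0) tzero))) (lzero M).
rewrite /= upd0 d0 in hP.
have hS := asup_ge HM e 0 phi x.
have hKD : K * aeval e (Dform C phi) <= 0 by rewrite mulr_ge0_le0.
move: hpos; rewrite aeval_Psi /shInf; lra.
Qed.


Definition ftrue := feq pz pz.
Definition ffalse := fnot ftrue.
Definition for_ f g := fnot (fand (fnot f) (fnot g)).
Definition fle i j s := fex s (feq (pplus (pvar i) (pvar s)) (pvar j)).

Fixpoint ttr (t : term) (k m : nat) : foform :=
  match t with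
  | tvar n => feq (pvar k) (pvar n)
  | tzero => feq (pvar k) pz
  | tone => feq (pvar k) po
  | tadd t1 t2 => fex m (fex m.+1 (fand (ttr t1 m m.+2) (fand (ttr t2 m.+1 m.+2)
        (feq (pvar k) (pplus (pvar m) (pvar m.+1))))))
  | tmul t1 t2 => fex m (fex m.+1 (fand (ttr t1 m m.+2) (fand (ttr t2 m.+1 m.+2)
        (feq (pvar k) (ptimes (pvar m) (pvar m.+1))))))
  | tmeet t1 t2 => fex m (fex m.+1 (fand (ttr t1 m m.+2) (fand (ttr t2 m.+1 m.+2)
        (for_ (fand (fle m m.+1 m.+2) (feq (pvar k) (pvar m)))
              (fand (fnot (fle m m.+1 m.+2)) (feq (pvar k) (pvar m.+1)))))))
  | tjoin t1 t2 => fex m (fex m.+1 (fand (ttr t1 m m.+2) (fand (ttr t2 m.+1 m.+2)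
        (for_ (fand (fle m m.+1 m.+2) (feq (pvar k) (pvar m.+1)))
              (fand (fnot (fle m m.+1 m.+2)) (feq (pvar k) (pvar m)))))))
  end.

Ltac updsimp := rewrite /upd; repeat (case: eqP => ?; try (exfalso; lia)).

Section PA.
Variables (N : PAstr) (HN : is_PA N).
Notation L := (PA_to_L N).

Lemma for_P (a : nat -> N) f g : fosat a (for_ f g) <-> fosat a f \/ fosat a g.
Proof.
rewrite /for_ /=; split; last tauto.
move=> h; case: (classic (fosat a f)) => hf; [by left|right].
by apply: NNPP => hg; apply: h.
Qed.

Lemma ftrue_P (a : nat -> N) : fosat a ftrue.
Proof. by []. Qed.

Lemma fle_P (a : nat -> N) i j s : (i < s)%N -> (j < s)%N -> fosat a (fle i j s) <-> pa_le (a i) (a j).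
Proof.
move=> hi hj /=; rewrite /pa_le; split => -[z hz]; exists z; move: hz.
  by rewrite /=; updsimp.
by rewrite /=; updsimp.
Qed.

Lemma bin_sem (P : N -> N -> N -> Prop) t1 t2 k m (a : nat -> N) G :
  (tbnd t1 <= m)%N -> (tbnd t2 <= m)%N ->
  (forall a, fosat a (ttr t1 m m.+2) <-> a m = @teval L a t1) ->
  (forall a, fosat a (ttr t2 m.+1 m.+2) <-> a m.+1 = @teval L a t2) ->
  (forall x1 x2, fosat (upd (upd a m x1) m.+1 x2) G <-> P (a k) x1 x2) ->
  fosat a (fex m (fex m.+1 (fand (ttr t1 m m.+2) (fand (ttr t2 m.+1 m.+2) G)))) <->
  P (a k) (@teval L a t1) (@teval L a t2).
Proof.
move=> h1 h2 IH1 IH2 hG /=.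
have E1 x1 x2 : fosat (upd (upd a m x1) m.+1 x2) (ttr t1 m m.+2) <-> x1 = @teval L a t1.
  rewrite IH1 upd_neq; last by lia.
  by rewrite upd_eq !teval_irr //; lia.
have E2 x1 x2 : fosat (upd (upd a m x1) m.+1 x2) (ttr t2 m.+1 m.+2) <-> x2 = @teval L a t2.
  by rewrite IH2 upd_eq !teval_irr //; lia.
split.
  by move=> [x1 [x2 [/E1 -> [/E2 -> /hG]]]].
move=> hP; exists (@teval L a t1), (@teval L a t2); split; first by apply/E1.
by split; [apply/E2 | apply/hG].
Qed.

Lemma ttr_sem t : forall k m (a : nat -> N), (tbnd t <= m)%N -> (k < m)%N ->
  fosat a (ttr t k m) <-> a k = @teval L a t.
Proof.
elim: t => [n|||t1 IH1 t2 IH2|t1 IH1 t2 IH2|t1 IH1 t2 IH2|t1 IH1 t2 IH2] k m a;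
  try by [].
- move=> h hk; have /andP[h1 h2] : (tbnd t1 <= m)%N && (tbnd t2 <= m)%N by rewrite -geq_max.
  apply: (bin_sem (P := fun ak x1 x2 => ak = padd N x1 x2)) => // [b|b|x1 x2].
  + by apply: IH1 => //; lia.
  + by apply: IH2 => //; lia.
  + by rewrite /=; updsimp.
- move=> h hk; have /andP[h1 h2] : (tbnd t1 <= m)%N && (tbnd t2 <= m)%N by rewrite -geq_max.
  apply: (bin_sem (P := fun ak x1 x2 => ak = pmul N x1 x2)) => // [b|b|x1 x2].
  + by apply: IH1 => //; lia.
  + by apply: IH2 => //; lia.
  + by rewrite /=; updsimp.
- move=> h hk; have /andP[h1 h2] : (tbnd t1 <= m)%N && (tbnd t2 <= m)%N by rewrite -geq_max.
  apply: (bin_sem (P := fun ak x1 x2 => ak = if pselect (pa_le x1 x2) then x1 else x2)) => // [b|b|x1 x2].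
  + by apply: IH1 => //; lia.
  + by apply: IH2 => //; lia.
  + rewrite for_P; cbn [fosat]; rewrite fle_P //; try lia.
    cbn [pteval]; updsimp; case: pselect => hl /=; tauto.
- move=> h hk; have /andP[h1 h2] : (tbnd t1 <= m)%N && (tbnd t2 <= m)%N by rewrite -geq_max.
  apply: (bin_sem (P := fun ak x1 x2 => ak = if pselect (pa_le x1 x2) then x2 else x1)) => // [b|b|x1 x2].
  + by apply: IH1 => //; lia.
  + by apply: IH2 => //; lia.
  + rewrite for_P; cbn [fosat]; rewrite fle_P //; try lia.
    cbn [pteval]; updsimp; case: pselect => hl /=; tauto.
Qed.

End PA.


Lemma fin_max (T : Type) (g : T -> real) (l : seq real) : forall y1,
  (forall y, g y \in l \/ g y <= g y1) -> exists y0, forall y, g y <= g y0.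
Proof.
elim: l => [|v l IH] y1 h.
  by exists y1 => y; case: (h y).
case: (classic (exists y2, g y2 = v /\ g y1 <= v)) => [[y2 [hv hle]]|hn].
- apply: (IH y2) => y; case: (h y) => [|hy]; last by right; lra.
  rewrite in_cons => /orP[/eqP ->|]; [by right; rewrite hv|by left].
- apply: (IH y1) => y; case: (h y) => [|hy]; last by right.
  rewrite in_cons => /orP[/eqP hyv|]; last by left.
  right; case: (lerP (g y1) v) => hh; last by lra.
  by exfalso; apply: hn; exists y.
Qed.

Lemma fin_min (T : Type) (g : T -> real) (l : seq real) : inhabited T ->
  (forall y, g y \in l) -> exists y0, forall y, g y0 <= g y.
Proof.
move=> [y1] h.
have [y0 hy0] := @fin_max T (fun y => - g y) (map -%R l) y1 (fun y => or_introl (map_f _ (h y))).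
by exists y0 => y; have := hy0 y; lra.
Qed.

Lemma fin_max' (T : Type) (g : T -> real) (l : seq real) : inhabited T ->
  (forall y, g y \in l) -> exists y0, forall y, g y <= g y0.
Proof. by move=> [y1] h; apply: (@fin_max T g l y1) => y; left. Qed.

Lemma range_sup_eq (T : Type) (g : T -> real) y0 : (forall y, g y <= g y0) -> sup (range g) = g y0.
Proof.
move=> h; apply/le_anti/andP; split.
  by apply: range_sup_le => //; exists.
exact: (@range_le_sup _ g (g y0) y0).
Qed.

Lemma range_inf_eq (T : Type) (g : T -> real) y0 : (forall y, g y0 <= g y) -> inf (range g) = g y0.
Proof.
move=> h; apply/le_anti/andP; split.
  exact: (@range_inf_le _ g (g y0) y0).
by apply: range_le_inf => //; exists.
Qed.

Fixpoint vals (f : aform) : seq real :=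
  match f with
  | aone => [:: 1]
  | adist _ _ => [:: 0; 1]
  | aplus f1 f2 => [seq v1 + v2 | v1 <- vals f1, v2 <- vals f2]
  | ascale r f1 => [seq r * v | v <- vals f1]
  | asup _ f1 | ainf _ f1 => vals f1
  end.

Definition fbool (b : bool) := if b then ftrue else ffalse.
Definition bigor (l : seq foform) := foldr for_ ffalse l.
Definition feqt t1 t2 m := fex m (fex m.+1 (fand (ttr t1 m m.+2) (fand (ttr t2 m.+1 m.+2)
  (feq (pvar m) (pvar m.+1))))).

Fixpoint atr (f : aform) (v : real) (m : nat) : foform :=
  match f with
  | aone => fbool (v == 1)
  | adist t1 t2 => for_ (fand (fbool (v == 0)) (feqt t1 t2 m))
                        (fand (fbool (v == 1)) (fnot (feqt t1 t2 m)))
  | aplus f1 f2 => bigor [seq fand (atr f1 v1 m) (atr f2 (v - v1) m) | v1 <- vals f1]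
  | ascale r f1 => bigor [seq fand (fbool (r * v1 == v)) (atr f1 v1 m) | v1 <- vals f1]
  | asup n f1 => fand (fex n (atr f1 v m))
                      (fnot (bigor [seq fex n (atr f1 w m) | w <- vals f1 & v < w]))
  | ainf n f1 => fand (fex n (atr f1 v m))
                      (fnot (bigor [seq fex n (atr f1 w m) | w <- vals f1 & w < v]))
  end.

Section PA.
Variables (N : PAstr).
Notation L := (PA_to_L N).

Lemma PA_good : good L.
Proof.
split; first by constructor; exact: pzero N.
move=> x y /=; case: pselect => hh; rewrite ?lexx ?ler01 //.
Qed.

Lemma fbool_P (a : nat -> N) b : fosat a (fbool b) <-> b.
Proof. by case: b => /=; split. Qed.

Lemma bigor_P (T : Type) (a : nat -> N) (F : T -> foform) s :
  fosat a (bigor [seq F x | x <- s]) <-> exists x, List.In x s /\ fosat a (F x).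
Proof.
elim: s => [|x s IH]; first by split => [[]|[x []]] //=.
have -> : bigor [seq F y | y <- x :: s] = for_ (F x) (bigor [seq F y | y <- s]) by [].
rewrite for_P IH; cbn [List.In]; split.
  by case=> [h|[y [hy1 hy2]]]; [exists x; split; [left|]|exists y; split; [right|]].
by case=> y [[<-|hy] hF]; [left|right; exists y].
Qed.

Lemma feqt_P (a : nat -> N) t1 t2 m : (tbnd t1 <= m)%N -> (tbnd t2 <= m)%N ->
  fosat a (feqt t1 t2 m) <-> @teval L a t1 = @teval L a t2.
Proof.
move=> h1 h2.
apply: (bin_sem (P := fun _ x1 x2 => x1 = x2)) => // [b|b|x1 x2].
- by apply: ttr_sem => //; lia.
- by apply: ttr_sem => //; lia.
- by rewrite /=; updsimp.
Qed.

Lemma vals_in f : forall a : nat -> N, @aeval L a f \in vals f.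
Proof.
elim: f => [|t1 t2|f1 IH1 f2 IH2|r f1 IH1|n f1 IH1|n f1 IH1] a /=.
- by rewrite mem_seq1.
- by case: pselect => hh; rewrite !inE eqxx ?orbT.
- exact: allpairs_f.
- exact: map_f.
- have [y0 hy0] := @fin_max' N (fun y => @aeval L (upd a n y) f1) (vals f1) (PA_good.1) (fun y => IH1 _).
  by rewrite (range_sup_eq hy0).
- have [y0 hy0] := @fin_min N (fun y => @aeval L (upd a n y) f1) (vals f1) (PA_good.1) (fun y => IH1 _).
  by rewrite (range_inf_eq hy0).
Qed.

Lemma InP (x : real) s : List.In x s <-> x \in s.
Proof.
elim: s => [|y s IH] //=; rewrite in_cons; split.
  by case=> [->|/IH h]; rewrite ?eqxx ?h ?orbT.
by case/orP => [/eqP ->|/IH h]; [left|right].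
Qed.

Lemma atr_sem f m : (abnd f <= m)%N -> forall (a : nat -> N) v,
  fosat a (atr f v m) <-> @aeval L a f = v.
Proof.
elim: f => [|t1 t2|f1 IH1 f2 IH2|r f1 IH1|n f1 IH1|n f1 IH1] hm a v;
  cbn [atr abnd aeval] in hm |- *.
- by rewrite fbool_P; split => [/eqP ->|<-].
- have [h1 h2] : (tbnd t1 <= m)%N /\ (tbnd t2 <= m)%N by split; lia.
  rewrite for_P; cbn [fosat]; rewrite !fbool_P feqt_P //.
  cbn [dist PA_to_L]; case: pselect => he; split.
  + by case=> -[/eqP -> _] //.
  + by move=> <-; left.
  + by case=> -[/eqP -> h] //.
  + by move=> <-; right.
- have [h1 h2] : (abnd f1 <= m)%N /\ (abnd f2 <= m)%N by split; lia.
  rewrite bigor_P; split.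
  + by case=> v1 [_ /= [/(IH1 h1) -> /(IH2 h2) ->]] //; lra.
  + move=> <-; exists (@aeval L a f1); split; first by apply/InP/vals_in.
    by split; [apply/(IH1 h1)|apply/(IH2 h2)] => //; lra.
- rewrite bigor_P; split.
  + by case=> v1 [_ /= [/fbool_P/eqP <- /(IH1 hm) ->]].
  + move=> <-; exists (@aeval L a f1); split; first by apply/InP/vals_in.
    by split; [apply/fbool_P|apply/(IH1 hm)].
- have h1 : (abnd f1 <= m)%N by lia.
  set g := fun y => @aeval L (upd a n y) f1.
  cbn [fosat]; rewrite bigor_P; split.
  + case=> -[x /(IH1 h1) hx] hn.
    have hx' : g x = v by apply: hx.
    have hle : forall y, g y <= g x.
      move=> y; rewrite hx'; case: (lerP (g y) v) => // hlt; exfalso; apply: hn.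
      exists (g y); split.
        by apply/InP; rewrite mem_filter hlt vals_in.
      by exists y; apply/(IH1 h1).
    by rewrite (range_sup_eq hle).
  + move=> hs.
    have [y0 hy0] := @fin_max' N g (vals f1) (PA_good.1) (fun y => vals_in _ _).
    have hv : g y0 = v by rewrite -hs (range_sup_eq hy0).
    split; first by exists y0; apply/(IH1 h1).
    case=> w [/InP]; rewrite mem_filter => /andP[hvw _] [x /(IH1 h1) hx].
    have := hy0 x; rewrite /g hx -/(g y0) hv; lra.
- have h1 : (abnd f1 <= m)%N by lia.
  set g := fun y => @aeval L (upd a n y) f1.
  cbn [fosat]; rewrite bigor_P; split.
  + case=> -[x /(IH1 h1) hx] hn.
    have hx' : g x = v by apply: hx.
    have hle : forall y, g x <= g y.
      move=> y; rewrite hx'; case: (lerP v (g y)) => // hlt; exfalso; apply: hn.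
      exists (g y); split.
        by apply/InP; rewrite mem_filter hlt vals_in.
      by exists y; apply/(IH1 h1).
    by rewrite (range_inf_eq hle).
  + move=> hs.
    have [y0 hy0] := @fin_min N g (vals f1) (PA_good.1) (fun y => vals_in _ _).
    have hv : g y0 = v by rewrite -hs (range_inf_eq hy0).
    split; first by exists y0; apply/(IH1 h1).
    case=> w [/InP]; rewrite mem_filter => /andP[hvw _] [x /(IH1 h1) hx].
    have := hy0 x; rewrite /g hx -/(g y0) hv; lra.
Qed.

End PA.


Fixpoint sabs (l : seq real) : real :=
  match l with [::] => 0 | v :: l => `|v| + sabs l end.

Lemma sabs_ge0 l : 0 <= sabs l.
Proof. elim: l => [|v l IH] //=; exact: addr_ge0. Qed.

Lemma sabs_le v l : v \in l -> `|v| <= sabs l.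
Proof.
elim: l => [|w l IH] //=; rewrite in_cons => /orP[/eqP ->|/IH h].
  by have := sabs_ge0 l; lra.
by have := normr_ge0 w; lra.
Qed.

Lemma gap1 (x : real) (l : seq real) : exists2 dx : real, 0 < dx &
  forall w, w \in l -> w != x -> dx <= `|w - x|.
Proof.
elim: l => [|y l [dx hdx IH]]; first by exists 1.
case: (eqVneq y x) => [->|yx].
  by exists dx => // w; rewrite in_cons => /orP[/eqP ->|]; [rewrite eqxx|apply: IH].
exists (Order.min dx `|y - x|).
  by rewrite lt_min hdx normr_gt0 subr_eq0 yx.
move=> w; rewrite in_cons => /orP[/eqP ->|hw] hwx; rewrite ge_min.
  by rewrite lexx orbT.
by rewrite IH.
Qed.

Lemma fin_gap (l : seq real) : exists2 d : real, 0 < d &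
  forall v w, v \in l -> w \in l -> v < w -> d <= w - v.
Proof.
elim: l => [|x l [d1 hd1 IH]]; first by exists 1.
have [dx hdx hx] := gap1 x l.
exists (Order.min d1 dx); first by rewrite lt_min hd1 hdx.
move=> v w; rewrite !in_cons => /orP[/eqP ->|hv] /orP[/eqP ->|hw] hlt.
- by rewrite ltxx in hlt.
- have := hx w hw; rewrite (gt_eqF hlt) => /(_ isT); rewrite ger0_norm; last by lra.
  by move=> h; rewrite ge_min h orbT.
- have := hx v hv; rewrite (lt_eqF hlt) => /(_ isT); rewrite ler0_norm; last by lra.
  by move=> h; rewrite ge_min; apply/orP; right; lra.
- by rewrite ge_min IH.
Qed.

Section PAside.
Variables (N : PAstr) (HN : is_PA N).
Notation L := (PA_to_L N).

Lemma PA_ind_le phi (e : nat -> N) c :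
  @aeval L (upd e 0 (pzero N)) phi <= c ->
  (forall x, @aeval L (upd e 0 x) phi <= c -> @aeval L (upd e 0 (padd N x (pone N))) phi <= c) ->
  forall x, @aeval L (upd e 0 x) phi <= c.
Proof.
move=> h0 hS.
set P := bigor [seq atr phi v (abnd phi) | v <- vals phi & v <= c].
have hP : forall x, fosat (upd e 0 x) P <-> @aeval L (upd e 0 x) phi <= c.
  move=> x; rewrite bigor_P; split.
    by case=> v [/InP]; rewrite mem_filter => /andP[hv _] /atr_sem -> //.
  move=> h; exists (@aeval L (upd e 0 x) phi); split.
    by apply/InP; rewrite mem_filter h vals_in.
  exact/atr_sem.
move=> x; apply/hP; apply: (pa_ind HN) => [|y]; first exact/hP.
by move=> /hP /hS /hP.
Qed.

Lemma IndAx_PA phi C K (d : real) (hd : 0 < d)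
  (hgap : forall v w, v \in vals phi -> w \in vals phi -> v < w -> d <= w - v)
  (hC : C = 2 * sabs (vals phi) + 1) (hK : K = 2 * sabs (vals phi) / d) :
  forall e : nat -> N, 0 <= @aeval L e (Psi C K phi).
Proof.
move=> e.
set B := sabs (vals phi) in hC hK *.
have HG := @PA_good N.
set f := fun x => @aeval L (upd e 0 x) phi.
have hfB x : `|f x| <= B by apply: sabs_le; apply: vals_in.
have hfB' x : - B <= f x /\ f x <= B by have := hfB x; rewrite ler_norml => /andP[].
have hB0 : 0 <= B := sabs_ge0 _.
have hK0 : 0 <= K.
  rewrite hK; apply: divr_ge0; [lra | exact: ltW].
have hP : f (pzero N) <= @aeval L e (shInf C phi tzero).
  apply: (ainf_ge HG) => y /=; rewrite upd0.
  have := hfB' y; have := hfB' (pzero N); rewrite /f.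
  by case: pselect => [hy|_] /=; [rewrite hy|]; lra.
have hDx x : f (padd N x (pone N)) - f x <= @aeval L e (Dform C phi).
  apply: le_trans (asup_ge HG e (Xv phi) _ x).
  have h1 : f (padd N x (pone N)) <= @aeval L (upd e (Xv phi) x) (shInf C phi (tadd (tvar (Xv phi)) tone)).
    apply: (ainf_ge HG) => y /=; rewrite eval_inner updX0 upd0.
    have := hfB' y; have := hfB' (padd N x (pone N)); rewrite /f.
    by case: pselect => [hy|_] /=; [rewrite hy|]; lra.
  have h2 : @aeval L (upd e (Xv phi) x) (shSup C phi (tvar (Xv phi))) <= f x.
    apply: (asup_le HG) => y /=; rewrite eval_inner updX0 upd0.
    have := hfB' y; have := hfB' x; rewrite /f.
    by case: pselect => [hy|_] /=; [rewrite hy|]; lra.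
  move: h1 h2; rewrite /=; lra.
have hS c : (forall x, f x <= c) -> @aeval L e (asup 0 phi) <= c by move=> h; apply: (asup_le HG).
rewrite aeval_Psi.
case: (classic (exists x, f x < f (padd N x (pone N)))) => [[x hx]|hn].
- have hdx : d <= f (padd N x (pone N)) - f x by apply: hgap => //; apply: vals_in.
  have hKd : K * d = 2 * B by rewrite hK divfK // gt_eqF.
  have hKD : K * d <= K * @aeval L e (Dform C phi).
    by apply: ler_wpM2l => //; apply: le_trans (hDx x).
  have := hS B (fun x => (hfB' x).2); have := hfB' (pzero N); lra.
- have hdec x : f (padd N x (pone N)) <= f x.
    by case: (lerP (f (padd N x (pone N))) (f x)) => // h; exfalso; apply: hn; exists x.
  have hall := @PA_ind_le phi e (f (pzero N)) (lexx _) (fun x hx => le_trans (hdec x) hx).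
  have [xm hxm] := @fin_min N f (vals phi) HG.1 (fun y => vals_in _ _).
  have hD0 : 0 <= @aeval L e (Dform C phi) by apply: le_trans (hDx xm); have := hxm (padd N xm (pone N)); lra.
  have := hS _ hall; have := mulr_ge0 hK0 hD0; lra.
Qed.

End PAside.

Lemma IndAx_AA phi : exists C K, 0 <= K /\ AA (IndAx C K phi).
Proof.
have [d hd hgap] := fin_gap (vals phi).
exists (2 * sabs (vals phi) + 1), (2 * sabs (vals phi) / d); split.
  by apply: divr_ge0; [have := sabs_ge0 (vals phi); lra|lra].
split; first exact: IndAx_closed.
move=> N HN; apply: closeall_pos'; first exact: PA_good.
exact: (IndAx_PA HN hd hgap).
Qed.


Section PAfacts.
Variables (N : PAstr) (HN : is_PA N).
Notation L := (PA_to_L N).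

Lemma zero_add x : padd N (pzero N) x = x.
Proof.
have H := @pa_ind _ HN (feq (pplus pz (pvar 0)) (pvar 0)) 0 (fun _ => pzero N).
apply: H => /=.
  by rewrite (pa_add0 HN).
by move=> y; rewrite (pa_addS HN) => ->.
Qed.

Lemma one_add x : padd N (pone N) x = padd N x (pone N).
Proof.
have H := @pa_ind _ HN (feq (pplus po (pvar 0)) (pplus (pvar 0) po)) 0 (fun _ => pzero N).
apply: H => /=.
  by rewrite (pa_add0 HN) zero_add.
by move=> y; rewrite (pa_addS HN) => ->.
Qed.

Definition g1 := ascale (-1) (adist (tmeet tzero (tvar 0)) tzero).
Definition g4 := aplus (adist (tadd (tvar 0) tone) (tadd (tvar 1) tone))
                       (ascale (-1) (adist (tvar 0) (tvar 1))).
Definition g3 := aplus (adist (tmeet tone (tvar 0)) tone)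
                       (ascale (-1) (ainf 1 (adist (tadd (tvar 1) tone) (tvar 0)))).

Lemma g1_PA (e : nat -> N) : 0 <= @aeval L e g1.
Proof.
rewrite /= ; case: pselect => [_|hn] /=.
  by case: pselect => //= _; rewrite mulr0.
by exfalso; apply: hn; exists (e 0); rewrite zero_add.
Qed.

Lemma g4_PA (e : nat -> N) : 0 <= @aeval L e g4.
Proof.
rewrite /=; case: pselect => [h|h] /=; case: pselect => [h'|h'] //=; try lra.
by exfalso; apply: h'; apply: (pa_succ_inj HN).
Qed.

Lemma g3_PA (e : nat -> N) : 0 <= @aeval L e g3.
Proof.
have HG := @PA_good N.
have hb y : 0 <= @aeval L (upd e 1 y) (adist (tadd (tvar 1) tone) (tvar 0)) <= 1.
  by have := HG.2; apply.
rewrite (_ : @aeval L e g3 = @aeval L e (adist (tmeet tone (tvar 0)) tone) +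
  -1 * @aeval L e (ainf 1 (adist (tadd (tvar 1) tone) (tvar 0)))) //.
case: (pselect (pa_le (pone N) (e 0))) => [[w hw]|hn].
- have hi := ainf_le HG e 1 (adist (tadd (tvar 1) tone) (tvar 0)) w.
  have h0 : @aeval L (upd e 1 w) (adist (tadd (tvar 1) tone) (tvar 0)) = 0.
    rewrite /= upd_eq upd_neq // -hw one_add.
    by case: pselect.
  have h1 : @aeval L e (adist (tmeet tone (tvar 0)) tone) = 0.
    rewrite /=; case: pselect => [_|hh] /=; first by case: pselect.
    by exfalso; apply: hh; exists w.
  lra.
- have hi := ainf_le HG e 1 (adist (tadd (tvar 1) tone) (tvar 0)) (e 0).
  have := hb (e 0).
  have h1 : @aeval L e (adist (tmeet tone (tvar 0)) tone) = 1.
    rewrite /=; case: pselect => [hh|_] /=; first by exfalso; apply: hn.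
    case: pselect => [he|_] //=.
    by exfalso; apply: hn; rewrite he; exists (pzero N); rewrite (pa_add0 HN).
  lra.
Qed.

End PAfacts.

Lemma g1_AA : AA (closeall 1 g1).
Proof.
split; first by apply: closed_closeall.
move=> N HN; apply: closeall_pos'; [exact: PA_good|exact: g1_PA].
Qed.

Lemma g4_AA : AA (closeall 2 g4).
Proof.
split; first by apply: closed_closeall.
move=> N HN; apply: closeall_pos'; [exact: PA_good|exact: g4_PA].
Qed.

Lemma g3_AA : AA (closeall 2 g3).
Proof.
split; first by apply: closed_closeall.
move=> N HN; apply: closeall_pos'; [exact: PA_good|exact: g3_PA].
Qed.


Lemma small_le0 (a : real) : (forall e : real, 0 < e -> a <= e) -> a <= 0.
Proof.
move=> h; case: (lerP a 0) => // ha.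
have := h (a / 2) ltac:(lra); lra.
Qed.

Lemma inv_small (e : real) (n : nat) : 0 < e -> 2 / e < n%:R -> (n.+1%:R)^-1 < e / 2.
Proof.
move=> he hn.
set k : real := n.+1%:R.
have hk : 0 < k by rewrite /k ltr0Sn.
have hkn : n%:R < k by rewrite /k ltr_nat.
have h2 : 2 / e * e = 2 by rewrite divfK // gt_eqF.
have hke : 2 < k * e.
  rewrite -h2 ltr_pM2r //; lra.
have hki : 0 < k^-1 by rewrite invr_gt0.
have hkk : k^-1 * (k * e) = e by rewrite mulrA mulVf ?mul1r // gt_eqF.
have : k^-1 * 2 < k^-1 * (k * e) by rewrite ltr_pM2l.
rewrite hkk; clearbody k; lra.
Qed.

Section Mside.
Variables (M : Lpre) (HM : Lstruct_axioms M) (HAA : models_AA M).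

Let HG := Lstruct_good HM.

Lemma AA_use g n : AA (closeall n g) -> forall e : nat -> M, 0 <= aeval e g.
Proof. by move=> h; apply: (closeall_pos HG) => e; exact: (HAA h e). Qed.

Lemma d0 (x : M) : dist M x x = 0.
Proof. exact/(ax_dist_eq0 HM). Qed.

Lemma dge0 (x y : M) : 0 <= dist M x y.
Proof. exact: (ax_dist_ge0 HM). Qed.

Lemma F1M (x : M) : lmeet M (lzero M) x = lzero M.
Proof.
have := AA_use g1_AA (fun _ => x); rewrite /= => h.
apply/(ax_dist_eq0 HM); have := dge0 (lmeet M (lzero M) x) (lzero M); lra.
Qed.

Lemma F4M (x z : M) : dist M x z <= dist M (ladd M x (lone M)) (ladd M z (lone M)).
Proof. have := AA_use g4_AA (fun k => if k == 0%N then x else z); rewrite /=; lra. Qed.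

Lemma lip_succ (x y : M) : dist M (ladd M x (lone M)) (ladd M y (lone M)) <= dist M x y.
Proof.
apply: le_trans (ax_lip_add HM x (lone M) y (lone M)) _.
by rewrite ge_max lexx d0 dge0.
Qed.

Lemma F3M (y : M) : Lle (lone M) y -> forall e : real, 0 < e ->
  exists z, dist M (ladd M z (lone M)) y < e.
Proof.
move=> hy e he.
have h := AA_use g3_AA (fun _ => y).
rewrite (_ : aeval (fun _ => y) g3 = aeval (fun _ => y) (adist (tmeet tone (tvar 0)) tone) +
  -1 * aeval (fun _ => y) (ainf 1 (adist (tadd (tvar 1) tone) (tvar 0)))) // in h.
have h1 : aeval (fun _ => y) (adist (tmeet tone (tvar 0)) tone) = 0.
  by rewrite /= hy d0.
have hi : aeval (fun _ => y) (ainf 1 (adist (tadd (tvar 1) tone) (tvar 0))) < e by lra.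
have [s [z _ <-] hs] := inf_lt (ex_intro _ _ (ex_intro2 _ _ (lzero M) I erefl)) hi.
by exists z; move: hs; rewrite /= /upd.
Qed.

Lemma pred_exists (y : M) : Lle (lone M) y -> exists z, ladd M z (lone M) = y.
Proof.
move=> hy.
have h n : exists z, dist M (ladd M z (lone M)) y < (n.+1%:R)^-1.
  by apply: F3M => //; rewrite invr_gt0 ltr0Sn.
have [u hu] := choice h.
have hsmall e : 0 < e -> exists Nn : nat, forall n, (Nn <= n)%N -> (n.+1%:R : real)^-1 < e / 2.
  move=> he; exists (Num.Def.archi_bound (2 / e)) => n hn.
  apply: inv_small => //.
  apply: lt_le_trans (archi_boundP _) _; first by apply: divr_ge0; lra.
  by rewrite ler_nat.
have hc : cauchy u.
  move=> e he; have [Nn hNn] := hsmall e he; exists Nn => n m hn hm.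
  apply: le_lt_trans (F4M _ _) _.
  apply: le_lt_trans (ax_dist_tri HM _ y _) _.
  rewrite (ax_dist_sym HM y).
  move: (hu n) (hu m) (hNn n hn) (hNn m hm); move: (n.+1%:R^-1 : real) (m.+1%:R^-1 : real) => a b; lra.
have [z hz] := ax_complete HM hc.
exists z; apply/(ax_dist_eq0 HM)/le_anti/andP; split; last exact: dge0.
apply: small_le0 => e he.
have [N1 hN1] := hz (e / 2) ltac:(lra).
have [N2 hN2] := hsmall e he.
set n := maxn N1 N2.
have h1 := hN1 n (leq_maxl _ _).
have h2 := hN2 n (leq_maxr _ _).
apply: le_trans (ax_dist_tri HM _ (ladd M (u n) (lone M)) _) _.
have := lip_succ z (u n); have := hu n; rewrite (ax_dist_sym HM z); move: h2; move: (n.+1%:R^-1 : real) => a; lra.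
Qed.

Lemma dts_le (D : set M) x y : D y -> dist_to_set x D <= dist M x y.
Proof.
move=> hy; apply: ge_inf; last by exists y.
by exists 0 => _ [z _ <-]; apply: dge0.
Qed.

Lemma dts_ge (D : set M) x c : D !=set0 -> (forall y, D y -> c <= dist M x y) -> c <= dist_to_set x D.
Proof.
move=> [y hy] h; apply: lb_le_inf; first by exists (dist M x y), y.
by move=> _ [z hz <-]; apply: h.
Qed.

Lemma dts_mem (D : set M) x : metric_closed D -> D !=set0 -> dist_to_set x D <= 0 -> D x.
Proof.
move=> hcl [y0 hy0] h; apply: hcl => e he.
have hne : [set dist M x y | y in D] !=set0 by exists (dist M x y0), y0.
have [_ [y hy <-] hs] := inf_lt hne (le_lt_trans h he).
by exists y.
Qed.

End Mside.


Unset Implicit Arguments.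

Theorem mainTheorem5 (M : Lpre) (HM : Lstruct_axioms M) (HAA : models_AA M)
  (I : set M) (HI : proper_cut I) :
  ~ formula_definable I /\
  ((forall y : M, ~ I y -> Lle (lone M) y) -> ~ formula_definable (~` I)).
Proof.
have HG := Lstruct_good HM.
case: HI => [[[i0 hi0] [hdown hsucc]] hne].
have hI0 : I (lzero M) by apply: (hdown _ i0) => //; exact: F1M.
have [b hb] : exists b, ~ I b.
  apply: NNPP => hn; move/eqP: hne; apply; apply/seteqP; split => x // _.
  by apply: NNPP => hx; apply: hn; exists x.
split.
- case=> hcl [phi [a hdef]].
  have [C [K [hK hAA']]] := IndAx_AA phi.
  have hpos : 0 <= aeval a (Psi C K phi) by apply: (AA_use HM HAA hAA').
  have hdec x : aeval (upd a 0 (ladd M x (lone M))) phi <= aeval (upd a 0 x) phi.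
    rewrite -!hdef; apply: dts_ge; first by exists i0.
    move=> y hy; apply: le_trans (dts_le HM _ (hsucc _ hy)) _.
    exact: lip_succ.
  have hall := M_ind HG (d0 HM) hK hpos hdec.
  apply: hb; apply: (dts_mem hcl); first by exists i0.
  have := hall b; rewrite -!hdef => h.
  apply: le_trans h _; apply: le_trans (dts_le HM _ hI0) _.
  by rewrite d0.
- move=> h1 [hcl [phi [a hdef]]].
  have [C [K [hK hAA']]] := IndAx_AA (ascale (-1) phi).
  have hpos : 0 <= aeval a (Psi C K (ascale (-1) phi)) by apply: (AA_use HM HAA hAA').
  have hJ : (~` I) !=set0 by exists b.
  have hdec x : aeval (upd a 0 (ladd M x (lone M))) (ascale (-1) phi) <=
                aeval (upd a 0 x) (ascale (-1) phi).
    rewrite /= -!hdef.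
    suff : dist_to_set x (~` I) <= dist_to_set (ladd M x (lone M)) (~` I) by lra.
    apply: dts_ge => // y hy.
    have [z hz] := pred_exists HM HAA (h1 y hy).
    have hzJ : (~` I) z by move=> hzI; apply: hy; rewrite -hz; apply: hsucc.
    apply: le_trans (dts_le HM _ hzJ) _.
    by rewrite -hz; apply: F4M.
  have hall := M_ind HG (d0 HM) hK hpos hdec.
  have := hall b; rewrite /= -!hdef => h.
  have hb0 : dist_to_set b (~` I) <= 0.
    by apply: le_trans (dts_le HM _ hb) _; rewrite d0.
  have h00 : 0 <= dist_to_set (lzero M) (~` I) by apply: dts_ge => // y _; apply: dge0.
  have : (~` I) (lzero M).
    by apply: (dts_mem hcl hJ); lra.
  by apply.
Qed.
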